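(* Let $G$ be a finite induced regular group and let $x\in G$ be such that $C_G(x)$ is a maximal centralizer and $C_G(x)\neq \beta_G(x)\cup Z(G)$. Then there is an element $y\in C_G(x)\setminus\beta_G(x)$ such that the order of $yZ(G)$ in $G/Z(G)$ is a prime.
   Context: For a finite group $G$, $C_G(x)$ denotes the centralizer of $x\in G$ and $Z(G)$ the center; $\beta_G(x)=\{y\in G\mid C_G(y)=C_G(x)\}$. The non-centralizer graph $\Upsilon_G$ is the simple graph with vertex set $G$ in which two distinct vertices $x,y$ are adjacent iff $C_G(x)\neq C_G(y)$; the induced non-centralizer graph $\Upsilon_{G\setminus Z(G)}$ is its induced subgraph on the vertex set $G\setminus Z(G)$. $G$ is called induced regular if $\Upsilon_{G\setminus Z(G)}$ is a regular graph (all vertices have the same degree). A centralizer $C_G(x)$ is called maximal if it is not contained in any other proper centralizer of $G$. *)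

(* Defs.v *)
From mathcomp Require Import all_boot all_fingroup all_solvable.
Set Implicit Arguments. Unset Strict Implicit. Unset Printing Implicit Defensive.
Import GroupScope.
Local Open Scope group_scope.

Definition beta_set (gT : finGroupType) (G : {group gT}) (x : gT) : {set gT} :=
  [set y in G | 'C_G[y] == 'C_G[x]].

(* adjacency in the non-centralizer graph: distinct and different centralizers *)
Definition nc_adj (gT : finGroupType) (G : {group gT}) (x y : gT) : bool :=
  (x != y) && ('C_G[x] != 'C_G[y]).

Definition induced_deg (gT : finGroupType) (G : {group gT}) (x : gT) : nat :=
  #|[set y in G :\: 'Z(G) | nc_adj G x y]|.

Definition induced_regular (gT : finGroupType) (G : {group gT}) : Prop :=
  forall x y, x \in G :\: 'Z(G) -> y \in G :\: 'Z(G) ->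
    induced_deg G x = induced_deg G y.

Definition maximal_centralizer (gT : finGroupType) (G : {group gT}) (x : gT) : Prop :=
  'C_G[x] \proper G /\
  forall y, y \in G -> 'C_G[y] \proper G -> 'C_G[x] \subset 'C_G[y] ->
    'C_G[y] = 'C_G[x].

(* Main.v *)
Require Import Defs.
From mathcomp Require Import all_boot all_fingroup all_solvable.
Import GroupScope.
Local Open Scope group_scope.
Set Implicit Arguments. Unset Strict Implicit.
From mathcomp Require Import zify.

Section Aux.
Variables (gT : finGroupType) (G : {group gT}) (x : gT).

Lemma Zcomm g h : g \in 'Z(G) -> h \in G -> commute h g.
Proof. by case/centerP=> _ c hG; apply/commute_sym/c. Qed.

Lemma inZ g : g \in G -> (forall h, h \in G -> commute h g) -> g \in 'Z(G).
Proof. by move=> gG c; apply/centerP; split=> // h hG; apply/commute_sym/c. Qed.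

Lemma ZCG g : g \in 'Z(G) -> G \subset 'C_G[g].
Proof.
move=> gZ; apply/subsetP=> h hG; rewrite inE hG; exact/cent1P/Zcomm.
Qed.

Lemma memCP h g : reflect (h \in G /\ commute h g) (h \in 'C_G[g]).
Proof.
rewrite inE; apply: (iffP andP) => [[a /cent1P b]|[a b]]; split=> //; exact/cent1P.
Qed.

Hypothesis xG : x \in G.
Hypothesis prx : 'C_G[x] \proper G.
Hypothesis maxx : forall y, y \in G -> 'C_G[y] \proper G -> 'C_G[x] \subset 'C_G[y] ->
    'C_G[y] = 'C_G[x].

Lemma F1 a : a \in G ->
  (a \in beta_set G x :|: 'Z(G)) = ('C_G[x] \subset 'C_G[a]).
Proof.
move=> aG; apply/idP/idP.
- case/setUP.
  + by rewrite inE => /andP[_ /eqP ->]; exact: subxx.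
  + move=> aZ; apply: subset_trans (ZCG aZ); exact: subsetIl.
- move=> sub; case pr: ('C_G[a] \proper G).
  + have e := maxx aG pr sub.
    by apply/setUP; left; rewrite inE aG e eqxx.
  + apply/setUP; right; apply: inZ aG _ => h hG.
    rewrite properE subsetIl /= in pr; move/negbFE: pr => /subsetP /(_ h hG).
    by case/memCP.
Qed.

Lemma F1P a : reflect (a \in G /\ forall h, h \in 'C_G[x] -> commute h a)
  (a \in beta_set G x :|: 'Z(G)).
Proof.
apply: (iffP idP).
- move=> aA.
  have aG : a \in G.
    by case/setUP: aA; [rewrite inE => /andP[] | move/(subsetP (center_sub G))].
  split=> // h hC; move: aA; rewrite F1 // => /subsetP /(_ h hC); by case/memCP.
- move=> [aG c]; rewrite F1 //; apply/subsetP=> h hC; apply/memCP; split=> //.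
  + by case/memCP: hC.
  + exact: c.
Qed.

Lemma BZ g : g \in beta_set G x -> g \notin 'Z(G).
Proof.
move=> gB; apply/negP=> gZ; move: gB; rewrite inE => /andP[_ /eqP e].
move: prx; rewrite properE => /andP[_]; by rewrite -e ZCG.
Qed.

Lemma AC : beta_set G x :|: 'Z(G) \subset 'C_G[x].
Proof.
apply/subsetP=> a aA; have [aG _] := F1P _ aA; apply/memCP; split=> //.
case/setUP: aA.
- rewrite inE => /andP[_ /eqP e].
  have : a \in 'C_G[a] by apply/memCP; split=> //; exact/cent1P/(cent1id a).
  by rewrite e => /memCP[].
- move=> aZ; apply/commute_sym; exact: Zcomm.
Qed.


Notation A := (beta_set G x :|: 'Z(G)).

Lemma oneA : 1 \in A.
Proof. by apply/setUP; right; exact: group1. Qed.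

Lemma descend n y : #[y] <= n -> y \in 'C_G[x] -> y \notin A ->
  exists2 p, prime p & exists2 y', y' \in 'C_G[x] & (y' \notin A) && (y' ^+ p \in A).
Proof.
elim: n y => [|n IH] y le yC yA.
  by move: (order_gt0 y); rewrite ltnNge (leq_trans le (leq0n 0)).
have y1 : y != 1 by apply: contraNneq yA => ->; exact: oneA.
have gt1 : 1 < #[y] by rewrite order_gt1.
have pp := pdiv_prime gt1.
case: (boolP (y ^+ pdiv #[y] \in A)) => ypA.
  by exists (pdiv #[y]) => //; exists y => //; rewrite yA ypA.
apply: (IH (y ^+ pdiv #[y])) => //.
- rewrite orderXdiv ?pdiv_dvd //.
  rewrite -ltnS; apply: leq_trans le; apply: ltn_Pdiv => //; exact: prime_gt1.
- exact: groupX.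
Qed.

Hypothesis none : forall g, g \in 'C_G[x] :\: beta_set G x -> ~~ prime #[coset 'Z(G) g].

Lemma notZ p g : prime p -> g \in 'C_G[x] -> g \notin A -> g ^+ p \notin 'Z(G).
Proof.
move=> pp gC gA; apply/negP => gpZ.
have gG : g \in G by case/memCP: gC.
have gB : g \in 'C_G[x] :\: beta_set G x.
  by rewrite inE gC andbT; apply: contra gA => gB; apply/setUP; left.
have gN : g \in 'N('Z(G)) by apply: (subsetP (normal_norm (center_normal G))).
have e : coset 'Z(G) g ^+ p = 1 by rewrite -morphX //; apply: coset_id.
have nt : #[coset 'Z(G) g] != 1%N.
  rewrite order_eq1; apply/eqP => c1; move: gA; apply/negP; rewrite negbK.
  apply/setUP; right; exact: coset_idr.
have : #[coset 'Z(G) g] %| p by rewrite order_dvdn e.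
move/(prime_nt_dvdP pp nt) => ep.
by move: (none gB); rewrite ep pp.
Qed.

Lemma subCx p g : prime p -> g \in 'C_G[x] -> g \notin A -> g ^+ p \in A ->
  'C_G[g] \subset 'C_G[x].
Proof.
move=> pp gC gA gpA.
have gpB : g ^+ p \in beta_set G x.
  by case/setUP: gpA => // gpZ; move: (notZ pp gC gA); rewrite gpZ.
move: gpB; rewrite inE => /andP[_ /eqP <-].
apply/subsetP => h /memCP [hG c]; apply/memCP; split=> //; exact: commuteX.
Qed.

Lemma claim p y a : prime p -> y \in 'C_G[x] -> y \notin A -> y ^+ p \in A ->
  a \in A -> (y * a \in beta_set G y) && (y * a \notin A).
Proof.
move=> pp yC yA ypA aA.
have [aG ca] := F1P _ aA.
have yG : y \in G by case/memCP: yC.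
have cya : commute y a by apply: ca.
have gC : y * a \in 'C_G[x].
  apply/memCP; split; first exact: groupM.
  apply/commute_sym/commuteM; apply/commute_sym.
  - by case/memCP: yC.
  - by case/memCP: (subsetP AC a aA).
have gA : y * a \notin A.
  apply: contra yA => /F1P [gG cg]; apply/F1P; split=> // h hC.
  have -> : y = y * a * a^-1 by rewrite mulgK.
  apply: commuteM; first exact: cg.
  exact/commuteV/ca.
have gpA : (y * a) ^+ p \in A.
  rewrite expgMn //; apply/F1P; split.
  - by apply: groupM; apply: groupX.
  - move=> h hC; apply: commuteM; first by have [_ c] := F1P _ ypA; apply: c.
    by apply: commuteX; apply: ca.
rewrite gA andbT inE groupM //=.
have syx := subCx pp yC yA ypA.
have sgx := subCx pp gC gA gpA.
rewrite eqEsubset; apply/andP; split; apply/subsetP => h hh.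
- have hC := subsetP sgx h hh.
  case/memCP: hh => hG c; apply/memCP; split=> //.
  have -> : y = y * a * a^-1 by rewrite mulgK.
  apply: commuteM => //; exact/commuteV/ca.
- have hC := subsetP syx h hh.
  case/memCP: hh => hG c; apply/memCP; split=> //.
  apply: commuteM => //; exact: ca.
Qed.

End Aux.
Lemma degE (gT : finGroupType) (G : {group gT}) g : g \in G ->
  [set y in G :\: 'Z(G) | nc_adj G g y] = (G :\: 'Z(G)) :\: beta_set G g.
Proof.
move=> gG; apply/setP => h; rewrite [in RHS]inE [h \in beta_set _ _]inE [in LHS]inE /nc_adj.
case hD: (h \in G :\: 'Z(G)); rewrite ?andbF ?andbT //=.
have hG : h \in G by move: hD; rewrite inE => /andP[].
rewrite hG /=; case: (eqVneq g h) => [->|ne]; first by rewrite eqxx.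
by rewrite eq_sym.
Qed.

Theorem proposition3p3 (gT : finGroupType) (G : {group gT}) (x : gT) :
  induced_regular G -> x \in G -> maximal_centralizer G x ->
  'C_G[x] != beta_set G x :|: 'Z(G) ->
  exists2 y, y \in 'C_G[x] :\: beta_set G x &
    prime #[coset 'Z(G) y].
Proof.
move=> reg xG [prx maxx] neq.
case: (boolP [exists y in 'C_G[x] :\: beta_set G x, prime #[coset 'Z(G) y]]).
  by case/existsP => y /andP[h1 h2]; exists y.
move/existsPn => none'.
have none : forall g, g \in 'C_G[x] :\: beta_set G x -> ~~ prime #[coset 'Z(G) g].
  by move=> g gi; move: (none' g); rewrite gi.
have [y0 y0C y0A] : exists2 y0, y0 \in 'C_G[x] & y0 \notin beta_set G x :|: 'Z(G).
  have : ~~ ('C_G[x] \subset beta_set G x :|: 'Z(G)).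
    by apply: contra neq => s; rewrite eqEsubset s (AC xG maxx).
  by case/subsetPn => y0 h1 h2; exists y0.
have [p pp [y yC /andP[yA ypA]]] := descend (leqnn _) y0C y0A.
have cl := claim xG maxx none pp yC yA ypA.
have yG : y \in G by case/memCP: yC.
set A := beta_set G x :|: 'Z(G).
have cS : #|[set y * a | a in A]| = #|A| by apply: card_imset; apply: mulgI.
have sS : [set y * a | a in A] \subset (G :\: 'Z(G)) :&: beta_set G y.
  apply/subsetP => g /imsetP [a aA ->]; have /andP[h1 h2] := cl a aA.
  have aG : a \in G by have [] := F1P maxx _ aA.
  rewrite in_setI h1 andbT in_setD (groupM yG aG) andbT.

  by apply: contra h2 => gZ; apply/setUP; right.
have xD : x \in G :\: 'Z(G).
  rewrite inE xG andbT; apply/negP => xZ.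
  by move: prx; rewrite properE => /andP[_]; rewrite ZCG.
have yD : y \in G :\: 'Z(G).
  by rewrite inE yG andbT; apply: contra yA => yZ; apply/setUP; right.
have e := reg x y xD yD.
rewrite /induced_deg !degE // !(cardsD (G :\: 'Z(G))) in e.
have l1 := subset_leq_card (subsetIl (G :\: 'Z(G)) (beta_set G x)).
have l2 := subset_leq_card (subsetIl (G :\: 'Z(G)) (beta_set G y)).
have l3 := subset_leq_card (subsetIr (G :\: 'Z(G)) (beta_set G x)).
have l4 := subset_leq_card sS.
have l5 : #|beta_set G x| < #|A|.
  apply: proper_card; rewrite properE subsetUl /=.
  apply/subsetPn; exists 1; first exact: oneA G x.
  by apply/negP => /(BZ prx); rewrite group1.
have eab : #|(G :\: 'Z(G)) :&: beta_set G x| = #|(G :\: 'Z(G)) :&: beta_set G y|.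
  by rewrite -(subKn l1) e subKn.
rewrite cS eab in l4 l3.
by move: (leq_trans l4 l3); rewrite leqNgt l5.
Qed.
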